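(* Let $F:\mathcal{P}(V,A)\to S_2(A)$ be an irreducible, weakly viable consular election rule satisfying SPP and SPO. If $\{a,b\}$ is an edge of the range graph $\mathcal{G}(F)$, then there exists $c\in A$ such that $\{a,c\}$ and $\{b,c\}$ are also edges of $\mathcal{G}(F)$ (so $a,b,c$ form a $3$-cycle).
   Context: $V$ is a finite nonempty set of voters, $A$ a finite set of alternatives; a profile $P$ assigns to each voter $i$ a linear order $P_i$ on $A$; $P_i'P_{-i}$ replaces voter $i$'s order by $P_i'$; $P|_B$ is the profile of restrictions to $B\subseteq A$. $S_2(A)$ is the set of 2-element subsets of $A$; a consular election rule is a map $F:\mathcal{P}(V,A)\to S_2(A)$. SPO: for all $P$, $i$, $P_i'$, $\mathrm{best}(P_i,F(P))\succeq_i\mathrm{best}(P_i,F(P_i'P_{-i}))$; SPP: same with $\mathrm{worst}$, where $\mathrm{best}(P_i,W)$, $\mathrm{worst}(P_i,W)$ are the $P_i$-best and $P_i$-worst elements of $W$. Weakly viable: every $a\in A$ lies in $F(P)$ for some $P$. $F$ is reducible if there is a partition $A=B\uplus C$ and social choice functions $G:\mathcal{P}(V,B)\to B$, $H:\mathcal{P}(V,C)\to C$ with $F(P)=\{G(P|_B),H(P|_C)\}$ for all $P$; irreducible means not reducible. The range graph $\mathcal{G}(F)$ has vertex set $A$ and edge set equal to the range of $F$. *)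

(* Defs.v *)
From mathcomp Require Import all_boot.
Unset Printing Implicit Defensive.

(* A (strict) linear order on a finite type T: r x y means "x is strictly preferred to y". *)
Definition is_linear_order {T : finType} (r : rel T) : Prop :=
  irreflexive r /\ transitive r /\ (forall x y, x != y -> r x y || r y x).

Definition lorder (T : finType) := { r : rel T | is_linear_order r }.

Definition lrel {T : finType} (o : lorder T) : rel T := proj1_sig o.

Definition profile (V T : finType) := V -> lorder T.

Definition update {V T : finType} (P : profile V T) (i : V) (Pi' : lorder T)
  : profile V T := fun j => if j == i then Pi' else P j.

Definition restr_rel {T : finType} (B : {set T}) (r : rel T) : rel {x : T | x \in B} :=
  fun x y => r (val x) (val y).

Lemma restr_linear {T : finType} (B : {set T}) (o : lorder T) :
  is_linear_order (@restr_rel T B (lrel o)).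
Proof.
case: o => r [Hi [Ht Hc]]; rewrite /restr_rel /lrel /=; split; last split.
- by move=> x; apply: Hi.
- by move=> x y z; apply: Ht.
- by move=> x y Hxy; apply: Hc; apply: contra Hxy => /eqP H; apply/eqP; apply: val_inj.
Qed.

Definition restr_order {T : finType} (B : {set T}) (o : lorder T)
  : lorder {x : T | x \in B} := exist _ _ (restr_linear B o).

Definition restr_profile {V T : finType} (B : {set T}) (P : profile V T)
  : profile V {x : T | x \in B} := fun i => restr_order B (P i).

Definition consular_rule {V A : finType} (F : profile V A -> {set A}) : Prop :=
  forall P, #|F P| = 2.

Definition is_best {T : finType} (r : rel T) (W : {set T}) (x : T) : Prop :=
  x \in W /\ forall y, y \in W -> y != x -> r x y.
Definition is_worst {T : finType} (r : rel T) (W : {set T}) (x : T) : Prop :=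
  x \in W /\ forall y, y \in W -> y != x -> r y x.

Definition weakpref {T : finType} (r : rel T) (x y : T) : Prop := x = y \/ r x y.

Definition SPO {V A : finType} (F : profile V A -> {set A}) : Prop :=
  forall P i Pi' x y, is_best (lrel (P i)) (F P) x ->
    is_best (lrel (P i)) (F (update P i Pi')) y -> weakpref (lrel (P i)) x y.

Definition SPP {V A : finType} (F : profile V A -> {set A}) : Prop :=
  forall P i Pi' x y, is_worst (lrel (P i)) (F P) x ->
    is_worst (lrel (P i)) (F (update P i Pi')) y -> weakpref (lrel (P i)) x y.

Definition weakly_viable {V A : finType} (F : profile V A -> {set A}) : Prop :=
  forall a : A, exists P, a \in F P.

Definition reducible {V A : finType} (F : profile V A -> {set A}) : Prop :=
  exists (B : {set A})
    (G : profile V {x : A | x \in B} -> {x : A | x \in B})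
    (H : profile V {x : A | x \in ~: B} -> {x : A | x \in ~: B}),
    forall P, F P = [set val (G (restr_profile B P)); val (H (restr_profile (~: B) P))].

Definition irreducible {V A : finType} (F : profile V A -> {set A}) : Prop :=
  ~ reducible F.

Definition range_edge {V A : finType} (F : profile V A -> {set A}) (a b : A) : Prop :=
  exists P, F P = [set a; b].

(* Main.v *)
Require Import Defs.
From mathcomp Require Import all_boot.
From Stdlib Require Import FunctionalExtensionality ClassicalEpsilon Classical.

Set Implicit Arguments.
Unset Strict Implicit.

Section Consular.
Variables (V A : finType) (F : profile V A -> {set A}).
Hypothesis hcons : consular_rule F.
Hypothesis hspp : SPP F.
Hypothesis hspo : SPO F.

Lemma upd_at (P : profile V A) i M : update P i M i = M.
Proof. by rewrite /update eqxx. Qed.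

Lemma upd_upd (P : profile V A) i M N : update (update P i M) i N = update P i N.
Proof. apply: functional_extensionality => j; rewrite /update; by case: (j == i). Qed.

Lemma upd_id (P : profile V A) i : update P i (P i) = P.
Proof. apply: functional_extensionality => j; rewrite /update; by case: eqP => // ->. Qed.

Lemma lo_irr (o : lorder A) u : lrel o u u = false.
Proof. case: o => r [Hi _] /=; exact: Hi. Qed.

Lemma lo_trans (o : lorder A) u v w : lrel o u v -> lrel o v w -> lrel o u w.
Proof. case: o => r [_ [Ht _]] /= H1 H2; exact: Ht H1 H2. Qed.

Lemma lo_tot (o : lorder A) u v : u != v -> lrel o u v || lrel o v u.
Proof. case: o => r [_ [_ Hc]] /=; exact: Hc. Qed.

Lemma lo_asym (o : lorder A) u v : lrel o u v -> lrel o v u -> False.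
Proof. move=> H1 H2; have := lo_trans H1 H2; by rewrite lo_irr. Qed.

Lemma lo_neq (o : lorder A) u v : lrel o u v -> u != v.
Proof. by apply: contraTneq => ->; rewrite lo_irr. Qed.

Lemma best2 (o : lorder A) u v : lrel o u v -> is_best (lrel o) [set u; v] u.
Proof.
move=> H; split; first by rewrite set21.
by move=> z; rewrite in_set2 => /orP [/eqP -> /eqP // | /eqP -> _].
Qed.

Lemma worst2 (o : lorder A) u v : lrel o u v -> is_worst (lrel o) [set u; v] v.
Proof.
move=> H; split; first by rewrite set22.
by move=> z; rewrite in_set2 => /orP [/eqP -> _ | /eqP -> /eqP].
Qed.

Lemma two_ord (o : lorder A) (S : {set A}) : #|S| = 2 ->
  exists u v, S = [set u; v] /\ lrel o u v.
Proof.
move/eqP/cards2P => [x [y [nxy ->]]].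
case/orP: (lo_tot o nxy) => H; first by exists x, y.
by exists y, x; rewrite setUC.
Qed.

Lemma card_two P : exists u v, u != v /\ F P = [set u; v].
Proof. by apply/cards2P; rewrite hcons. Qed.

Definition mtop_rel (z : A) (r : rel A) : rel A :=
  fun u v => ((u == z) && (v != z)) || [&& u != z, v != z & r u v].

Lemma mtop_lin z (o : lorder A) : is_linear_order (mtop_rel z (lrel o)).
Proof.
rewrite /mtop_rel; split; last split.
- by move=> u; rewrite lo_irr; case: (u == z).
- move=> v u w.
  case: (eqVneq u z) => [->|nuz]; case: (eqVneq v z) => [->|nvz];
  case: (eqVneq w z) => [->|nwz]; rewrite ?eqxx ?nuz ?nvz ?nwz /= //;
  exact: lo_trans.
- move=> u v nuv.
  case: (eqVneq u z) => [Hu|nuz]; case: (eqVneq v z) => [Hv|nvz];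
  rewrite ?Hu ?Hv ?eqxx ?nuz ?nvz /= //.
  + by move: nuv; rewrite Hu Hv eqxx.
  + exact: lo_tot.
Qed.

Definition mtop (z : A) (o : lorder A) : lorder A :=
  exist _ (mtop_rel z (lrel o)) (mtop_lin z o).

Lemma mtop_top z o v : lrel (mtop z o) z v = (v != z).
Proof. by rewrite /lrel /= /mtop_rel eqxx /= ?andbF ?orbF. Qed.

Lemma mtop_to z o u : lrel (mtop z o) u z = false.
Proof. by rewrite /lrel /= /mtop_rel eqxx /= !andbF. Qed.

Lemma mtop_oth z o u v : u != z -> v != z -> lrel (mtop z o) u v = lrel o u v.
Proof. by move=> Hu Hv; rewrite /lrel /= /mtop_rel Hu Hv (negbTE Hu). Qed.

Definition rk_rel : rel A := fun u v => (enum_rank u < enum_rank v)%N.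
Lemma rk_lin : is_linear_order rk_rel.
Proof.
rewrite /rk_rel; split; last split.
- by move=> u; rewrite ltnn.
- by move=> v u w; apply: ltn_trans.
- move=> u v nuv; rewrite -neq_ltn; apply: contra nuv => /eqP H.
  by apply/eqP; apply: enum_rank_inj; apply: val_inj.
Qed.
Definition R0 : lorder A := exist _ rk_rel rk_lin.

Lemma walk (Pi : profile V A -> Prop) (P P' : profile V A) : Pi P ->
  (forall Q i, (forall j, Q j = P j \/ Q j = P' j) -> Pi Q -> Pi (update Q i (P' i))) ->
  Pi P'.
Proof.
move=> H0 Hs.
pose mix (s : seq V) : profile V A := fun j => if j \in s then P' j else P j.
have Hm : forall s, Pi (mix s).
  elim=> [|i s IH].
  - have -> : mix [::] = P by apply: functional_extensionality => j.
    exact: H0.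
  - have -> : mix (i :: s) = update (mix s) i (P' i).
      apply: functional_extensionality => j; rewrite /mix /update inE.
      by case: eqP => [->|].
    apply: Hs IH => j; rewrite /mix; case: (j \in s); tauto.
have -> : P' = mix (enum V).
  by apply: functional_extensionality => j; rewrite /mix mem_enum.
exact: Hm.
Qed.

Definition covered (t : A) := exists P, t \in F P.

Lemma lemN x y t : range_edge F x y -> covered t -> t != x -> t != y ->
  range_edge F t x \/ range_edge F t y.
Proof.
move=> [Qxy HQ] [Qt HQt] ntx nty.
have nxy : x != y.
  apply/negP => /eqP exy; move: (hcons Qxy); rewrite HQ exy setUid cards1 //.
set L := mtop t (mtop x (mtop y R0)).
have Ltop : forall z, z != t -> lrel L t z by move=> z nz; rewrite mtop_top.
set W := [set t; x; y].
have Lup : forall w z, w \in W -> z \notin W -> lrel L w z.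
  move=> w z; rewrite !inE -!orbA => /orP [/eqP -> | /orP [/eqP -> | /eqP ->]];
  rewrite negb_or => /andP [nzt]; first by rewrite mtop_top.
  - rewrite negb_or => /andP [nzx _].
    have nxt : x != t by rewrite eq_sym.
    by rewrite /L mtop_oth // mtop_top.
  - rewrite negb_or => /andP [nzx nzy].
    have nyt : y != t by rewrite eq_sym.
    have nyx : y != x by rewrite eq_sym.
    by rewrite /L mtop_oth // mtop_oth // mtop_top.
pose cL : profile V A := fun _ => L.
have Hsub : F cL \subset W.
  apply: (@walk (fun Q => F Q \subset W) Qxy cL).
    by rewrite HQ; apply/subsetP => z; rewrite !inE => /orP [->|->]; rewrite ?orbT.
  move=> Q i _ HQW.
  have [u [v [Huv ruv]]] := two_ord (L) (hcons (update Q i L)).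
  have [u' [v' [Huv' ruv']]] := two_ord (L) (hcons Q).
  have hw := hspp (P := update Q i L) (i := i) (Pi' := Q i) (x := v) (y := v').
  rewrite upd_upd upd_id upd_at in hw.
  have := hw _ _ ; rewrite Huv Huv' => /(_ (worst2 ruv) (worst2 ruv')) => wp.
  have v'W : v' \in W by apply: (subsetP HQW); rewrite Huv' set22.
  have vW : v \in W.
    apply/negPn/negP => nvW; have := Lup _ _ v'W nvW.
    case: wp => [evv' | Hvv']; first by rewrite evv' v'W in nvW.
    by move=> H; apply: (lo_asym Hvv' H).
  have uW : u \in W.
    apply/negPn/negP => nuW; have := Lup _ _ vW nuW => H; exact: lo_asym ruv H.
  by apply/subsetP => z; rewrite in_set2 => /orP [/eqP->|/eqP->].
have Ht : t \in F cL.
  apply: (@walk (fun Q => t \in F Q) Qt cL) => // Q i _ HtQ.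
  have [u [v [Huv ruv]]] := two_ord (L) (hcons (update Q i L)).
  have hb := hspo (P := update Q i L) (i := i) (Pi' := Q i) (x := u) (y := t).
  rewrite upd_upd upd_id upd_at Huv in hb.
  have bt : is_best (lrel L) (F Q) t.
    by split => // z _ nzt; apply: Ltop.
  case: (hb (best2 ruv) bt) => [eut | Hut].
    by change (t \in F (update Q i L)); rewrite Huv -eut set21.
  have : u != t by apply: lo_neq Hut.
  by move/Ltop => H; case: (lo_asym Hut H).
have [u [v [nuv Huv]]] := card_two cL.
have tF := Ht; rewrite Huv in_set2 in tF.
have [s [Hs nst]] : exists s, F cL = [set t; s] /\ s != t.
  case/orP: tF => /eqP ->; first by exists v; split; [exact: Huv | rewrite eq_sym].
  by exists u; split; [rewrite Huv setUC | ].
have sW : s \in W by apply: (subsetP Hsub); rewrite Hs set22.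
move: sW; rewrite !inE -!orbA (negbTE nst) /= => /orP [/eqP es | /eqP es].
- by left; exists cL; rewrite Hs es.
- by right; exists cL; rewrite Hs es.
Qed.

Section Dec.
Variable B : {set A}.
Hypothesis hdec : forall Q, exists g h, [/\ g \in B, h \notin B & F Q = [set g; h]].

Lemma uniq_dec g h g' h' : g \in B -> h \notin B -> g' \in B -> h' \notin B ->
  [set g; h] = [set g'; h'] -> g = g'.
Proof.
move=> gB hB g'B h'B E.
have : g \in [set g'; h'] by rewrite -E set21.
rewrite in_set2 => /orP [/eqP // | /eqP eh'].
by rewrite eh' (negbTE h'B) in gB.
Qed.

Lemma gmax P i M g h x y :
  F P = [set g; h] -> g \in B -> h \notin B ->
  F (update P i M) = [set x; y] -> x \in B -> y \notin B -> ~ lrel (P i) x g.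
Proof.
move=> HP gB hB HM xB yB rxg.
set L := P i.
have ngh : g != h by apply: contraNneq hB => <-.
have nxy : x != y by apply: contraNneq yB => <-.
have nxg : x != g := lo_neq rxg.
have rhg : lrel L h g.
  case/orP: (lo_tot L ngh) => // rgh.
  have hb := hspo (P := P) (i := i) (Pi' := M) (x := g).
  rewrite HP HM in hb.
  case/orP: (lo_tot L nxy) => rxy.
  - case: (hb x (best2 rgh) (best2 rxy)) => [egx | rgx].
      by rewrite egx lo_irr in rxg.
    by case: (lo_asym rgx rxg).
  - rewrite (setUC [set x]) in hb.
    case: (hb y (best2 rgh) (best2 rxy)) => [egy | rgy].
      by rewrite -egy gB in yB.
    by case: (lo_asym (lo_trans rgy rxy) rxg).
set N := mtop x L.
have [g1 [k [g1B kB HN]]] := hdec (update P i N).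
have nkx : k != x by apply: contraNneq kB => ->.
have HNx : F (update P i N) = [set x; k].
  have [u [v [Huv ruv]]] := two_ord N (hcons (update P i N)).
  have hb := hspo (P := update P i N) (i := i) (Pi' := M) (x := u) (y := x).
  rewrite upd_upd upd_at Huv HM in hb.
  have rxyN : lrel N x y by rewrite mtop_top eq_sym.
  case: (hb (best2 ruv) (best2 rxyN)) => [eux | ].
    2: by rewrite mtop_to.
  have : x \in [set g1; k] by rewrite -HN Huv eux set21.
  rewrite in_set2 => /orP [/eqP exg1 | /eqP exk]; first by rewrite HN exg1.
  by rewrite exk (negbTE kB) in xB.
have rxk_rgk : lrel L x k /\ lrel L g k.
  have hw := hspp (P := P) (i := i) (Pi' := N) (x := g).
  rewrite HP HNx in hw.
  have wg : is_worst (lrel L) [set g; h] g by rewrite setUC; apply: worst2.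
  have nxk : x != k by rewrite eq_sym.
  case/orP: (lo_tot L nxk) => [rxk | rkx].
  - case: (hw k wg (worst2 rxk)) => [egk | rgk].
      by rewrite egk (negbTE kB) in gB.
    by [].
  - rewrite (setUC [set x]) in hw.
    case: (hw x wg (worst2 rkx)) => [egx | rgx].
      by rewrite egx lo_irr in rxg.
    by case: (lo_asym rgx rxg).
case: rxk_rgk => rxk rgk.
have nhx : h != x by apply: contraNneq hB => ->.
have ngx : g != x by rewrite eq_sym.
have hw := hspp (P := update P i N) (i := i) (Pi' := P i) (x := k) (y := g).
rewrite upd_upd upd_id upd_at HNx HP in hw.
have wk : is_worst (lrel N) [set x; k] k by apply: worst2; rewrite mtop_top.
have wg : is_worst (lrel N) [set g; h] g.
  by rewrite setUC; apply: worst2; rewrite mtop_oth.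
case: (hw wk wg) => [ekg | rkg].
  by rewrite ekg gB in kB.
rewrite mtop_oth // in rkg.
by case: (lo_asym rgk rkg).
Qed.

Lemma indep P P' :
  (forall i u v, u \in B -> v \in B -> lrel (P i) u v = lrel (P' i) u v) ->
  forall g h g' h', F P = [set g; h] -> g \in B -> h \notin B ->
  F P' = [set g'; h'] -> g' \in B -> h' \notin B -> g = g'.
Proof.
move=> Hag g h g' h' HP gB hB HP' g'B h'B.
suff : forall g' h', F P' = [set g'; h'] -> g' \in B -> h' \notin B -> g' = g.
  by move=> H; rewrite (H g' h').
apply: (@walk (fun Q => forall g' h', F Q = [set g'; h'] -> g' \in B -> h' \notin B -> g' = g) P P').
  move=> g1 h1 H1 g1B h1B; apply: (@uniq_dec g1 h1 g h) => //.
  by rewrite -H1 HP.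
move=> Q i HQ IH g1 h1 H1 g1B h1B.
have [g0 [h0 [g0B h0B H0]]] := hdec Q.
have eg0 := IH _ _ H0 g0B h0B.
rewrite -eg0.
have n1 := gmax H0 g0B h0B H1 g1B h1B.
have n2 : ~ lrel (P' i) g0 g1.
  have := @gmax (update Q i (P' i)) i (Q i) g1 h1 g0 h0 H1 g1B h1B.
  rewrite upd_upd upd_id upd_at; by apply.
have n3 : ~ lrel (Q i) g0 g1.
  case: (HQ i) => ->; last by [].
  by rewrite Hag.
apply/eqP; apply: contraT => ne.
by case/orP: (lo_tot (Q i) ne) => H; [case: (n1 H) | case: (n3 H)].
Qed.

Definition gsel (d : A) (Q : profile V A) : A := odflt d [pick z in F Q :&: B].

Lemma gsel_spec d Q g h : F Q = [set g; h] -> g \in B -> h \notin B -> gsel d Q = g.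
Proof.
move=> HQ gB hB; rewrite /gsel; case: pickP => [z | H] /=.
  rewrite inE HQ in_set2 => /andP [/orP [/eqP -> // | /eqP ->] zB].
  by rewrite zB in hB.
by have := H g; rewrite inE HQ set21 gB.
Qed.

Lemma gsel_in d Q : gsel d Q \in B.
Proof. by have [g [h [gB hB HQ]]] := hdec Q; rewrite (gsel_spec d HQ gB hB). Qed.

Lemma gsel_restr d P Q : restr_profile B Q = restr_profile B P -> gsel d Q = gsel d P.
Proof.
move=> E.
have [g [h [gB hB HQ]]] := hdec Q.
have [g' [h' [g'B h'B HP]]] := hdec P.
rewrite (gsel_spec d HQ gB hB) (gsel_spec d HP g'B h'B).
apply: (indep _ HQ gB hB HP g'B h'B) => i u v hu hv.
exact (f_equal (fun R : profile V {x : A | x \in B} => lrel (R i) (exist _ u hu) (exist _ v hv)) E).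
Qed.

End Dec.

Lemma re_sym x y : range_edge F x y -> range_edge F y x.
Proof. by case=> P HP; exists P; rewrite setUC. Qed.

Lemma re_neq x y : range_edge F x y -> x != y.
Proof.
case=> P HP; apply/negP => /eqP exy; move: (hcons P).
by rewrite HP exy setUid cards1.
Qed.

Lemma main_sec : irreducible F -> weakly_viable F -> forall a b, range_edge F a b ->
  exists c, range_edge F a c /\ range_edge F b c.
Proof.
move=> hirr hwv a b hab; apply: NNPP => nc; apply: hirr.
pose adjb x y := if excluded_middle_informative (range_edge F x y) then true else false.
have adjbP : forall x y, adjb x y <-> range_edge F x y.
  by move=> x y; rewrite /adjb; case: excluded_middle_informative.
set B := [set z | adjb b z].
have inB : forall z, z \in B <-> range_edge F b z by move=> z; rewrite inE adjbP.
have aB : a \in B by apply/inB; apply: re_sym.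
have hdec : forall Q, exists g h, [/\ g \in B, h \notin B & F Q = [set g; h]].
  move=> Q; have [u [v [nuv Huv]]] := card_two Q.
  have euv : range_edge F u v by exists Q.
  case uB: (u \in B); case vB: (v \in B).
  - exfalso; move/inB: uB => bu; move/inB: vB => bv.
    case: (eqVneq a u) => [eau | nau].
      by apply: nc; exists v; split => //; rewrite eau.
    case: (eqVneq a v) => [eav | nav].
      by apply: nc; exists u; split => //; rewrite eav; apply: re_sym.
    case: (lemN euv (hwv a) nau nav) => H.
    + by apply: nc; exists u.
    + by apply: nc; exists v.
  - by exists u, v; rewrite vB.
  - by exists v, u; rewrite uB setUC.
  - exfalso.
    have nbu : b != u.
      apply/negP => /eqP ebu; move: vB; rewrite -ebu in euv.
      by move/negbT/negP; apply; apply/inB.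
    have nbv : b != v.
      apply/negP => /eqP ebv; move: uB; rewrite -ebv in euv.
      by move/negbT/negP; apply; apply/inB; apply: re_sym.
    case: (lemN euv (hwv b) nbu nbv) => H.
    + by move: uB => /negbT/negP; apply; apply/inB.
    + by move: vB => /negbT/negP; apply; apply/inB.
have hdecC : forall Q, exists g h, [/\ g \in ~: B, h \notin ~: B & F Q = [set g; h]].
  move=> Q; have [g [h [gB hB HQ]]] := hdec Q.
  by exists h, g; rewrite !in_setC gB hB setUC.
have [P0 _] := hab.
pose epsB (R : profile V {x : A | x \in B}) :=
  epsilon (inhabits P0) (fun Q => restr_profile B Q = R).
pose epsC (R : profile V {x : A | x \in ~: B}) :=
  epsilon (inhabits P0) (fun Q => restr_profile (~: B) Q = R).
exists B.
exists (fun R => exist (fun x => x \in B) (gsel B a (epsB R)) (gsel_in hdec a _)).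
exists (fun R => exist (fun x => x \in ~: B) (gsel (~: B) b (epsC R)) (gsel_in hdecC b _)).
move=> P /=.
rewrite (gsel_restr hdec a (Q := epsB (restr_profile B P)) (P := P)); last first.
  by apply: (epsilon_spec (inhabits P0) (fun Q => restr_profile B Q = restr_profile B P)); exists P.
rewrite (gsel_restr hdecC b (Q := epsC (restr_profile (~: B) P)) (P := P)); last first.
  by apply: (epsilon_spec (inhabits P0) (fun Q => restr_profile (~: B) Q = restr_profile (~: B) P)); exists P.
have [g [h [gB hB HP]]] := hdec P.
rewrite (gsel_spec a HP gB hB).
have HP' : F P = [set h; g] by rewrite setUC.
rewrite (gsel_spec (B := ~: B) b HP'); by rewrite ?in_setC ?gB ?hB.
Qed.

End Consular.

Theorem corollary40 (V A : finType) (F : profile V A -> {set A}) :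
  0 < #|V| ->
  consular_rule F ->
  irreducible F -> weakly_viable F -> SPP F -> SPO F ->
  forall a b : A, range_edge F a b ->
  exists c : A, range_edge F a c /\ range_edge F b c.
Proof.
move=> _ hcons hirr hwv hspp hspo.
exact: (main_sec hcons hspp hspo hirr hwv).
Qed.
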